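(* Let $a_\beta$ denote the unique maximizer of $T_0$ on $(0,\infty)$ (for $\beta>\beta_c$) and $q_\beta=a_\beta^{-2}$. Then $q_\beta=1+O(\beta^{-2})$ as $\beta\to\infty$.
   Context: $\Gamma_\beta=\frac{e^{-\beta}+e^{-3\beta/2}}{1-e^{-\beta/2}}$, $\beta_c$ the unique positive solution of $\Gamma_\beta=1$. $c_\beta=\frac{1+e^{-\beta/2}}{1-e^{-\beta/2}}$, $\mathcal L(h)=\log\sum_{k\in\mathbb Z}e^{hk}e^{-\beta|k|/2}/c_\beta$ for $|h|<\beta/2$. $\mathcal G(h)=\int_0^1\mathcal L(h(x-\frac12))dx$ for $h\in(-\beta,\beta)$, $\tilde h(q)$ the unique $h\in[0,\beta)$ with $\mathcal G'(h)=q$. $T_0(a)=a\log\Gamma_\beta+a\big(\mathcal G(\tilde h(a^{-2}))-a^{-2}\tilde h(a^{-2})\big)$ for $a>0$. *)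

(* Defs.v *)
From Stdlib Require Import Reals Lra ClassicalEpsilon.
From Coquelicot Require Import Coquelicot.
Open Scope R_scope.

Definition Gamma (b : R) : R :=
  (exp (- b) + exp (- (3 * b / 2))) / (1 - exp (- (b / 2))).

Definition beta_c : R :=
  epsilon (inhabits 0) (fun b => 0 < b /\ Gamma b = 1).

Definition c_beta (b : R) : R :=
  (1 + exp (- (b / 2))) / (1 - exp (- (b / 2))).

(* sum_{k in Z} e^{h k} e^{-beta |k| / 2}, split as k >= 0 and k = -(n+1) *)
Definition Zsum (b h : R) : R :=
  Series (fun n : nat => exp (h * INR n) * exp (- (b * Rabs (INR n) / 2)))
  + Series (fun n : nat => exp (h * (- INR (S n))) * exp (- (b * Rabs (- INR (S n)) / 2))).

(* L(h) = log( sum_k e^{hk} e^{-beta|k|/2} / c_beta ), meaningful for |h| < beta/2 *)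
Definition Lfun (b h : R) : R := ln (Zsum b h / c_beta b).

(* G(h) = int_0^1 L(h (x - 1/2)) dx, meaningful for h in (-beta, beta) *)
Definition Gfun (b h : R) : R := RInt (fun x => Lfun b (h * (x - 1 / 2))) 0 1.

Definition htilde (b q : R) : R :=
  epsilon (inhabits 0) (fun h => 0 <= h < b /\ Derive (Gfun b) h = q).

Definition T0 (b a : R) : R :=
  a * ln (Gamma b)
  + a * (Gfun b (htilde b (/ a ^ 2)) - / a ^ 2 * htilde b (/ a ^ 2)).

(* Main.v *)
Require Import Defs.
From Stdlib Require Import Reals Lra ClassicalEpsilon Ranalysis5.
From Coquelicot Require Import Coquelicot.
Open Scope R_scope.

Lemma exp_INR_pow x n : exp (x * INR n) = exp x ^ n.
Proof.
  induction n as [|n IH].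
  - simpl. rewrite Rmult_0_r, exp_0; reflexivity.
  - rewrite <- tech_pow_Rmult, <- IH, <- exp_plus. f_equal. rewrite S_INR. ring.
Qed.

Lemma scalR (x y : R) : scal x y = x * y.
Proof. reflexivity. Qed.

Definition uu b t := exp (t - b / 2).
Definition vv b t := exp (- t - b / 2).

Lemma uu_lt1 b t : t < b / 2 -> uu b t < 1.
Proof. intros; unfold uu; rewrite <- exp_0; apply exp_increasing; lra. Qed.
Lemma vv_lt1 b t : - t < b / 2 -> vv b t < 1.
Proof. intros; unfold vv; rewrite <- exp_0; apply exp_increasing; lra. Qed.

Lemma Zsum_closed b h : Rabs h < b / 2 ->
  Zsum b h = / (1 - uu b h) + vv b h / (1 - vv b h).
Proof.
  intros Hh. apply Rabs_def2 in Hh. destruct Hh as [H1 H2].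
  unfold Zsum. f_equal.
  - apply is_series_unique.
    apply is_series_ext with (fun n => uu b h ^ n).
    + intros n. unfold uu. rewrite <- exp_INR_pow, <- exp_plus.
      rewrite Rabs_right by (apply Rle_ge, pos_INR). f_equal. field.
    + apply is_series_geom. rewrite Rabs_right.
      * apply uu_lt1; lra.
      * left; apply exp_pos.
  - apply is_series_unique.
    replace (vv b h / (1 - vv b h)) with (scal (vv b h) (/ (1 - vv b h))).
    2:{ unfold scal; simpl; unfold mult; simpl. field. pose proof (vv_lt1 b h); lra. }
    apply is_series_ext with (fun n => scal (vv b h) (vv b h ^ n)).
    + intros n. rewrite scalR.
      unfold vv. rewrite <- exp_INR_pow, <- exp_plus.
      rewrite Rabs_Ropp, Rabs_right by (apply Rle_ge, pos_INR).
      rewrite <- exp_plus. f_equal. rewrite S_INR. field.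
    + apply (@is_series_scal_l R_AbsRing R_NormedModule). apply is_series_geom. rewrite Rabs_right.
      * apply vv_lt1; lra.
      * left; apply exp_pos.
Qed.

Definition rr b := exp (- (b / 2)).

Definition Lc b t := 2 * ln (1 - rr b) - ln (1 - uu b t) - ln (1 - vv b t).

Lemma uv_prod b t : uu b t * vv b t = rr b * rr b.
Proof. unfold uu, vv, rr. rewrite <- !exp_plus. f_equal. field. Qed.

Lemma rr_lt1 b : 0 < b -> rr b < 1.
Proof. intros; unfold rr; rewrite <- exp_0; apply exp_increasing; lra. Qed.

Lemma Lfun_closed b t : 0 < b -> Rabs t < b / 2 -> Lfun b t = Lc b t.
Proof.
  intros Hb Ht. pose proof Ht as Ht'. apply Rabs_def2 in Ht'. destruct Ht' as [H1 H2].
  unfold Lfun. rewrite Zsum_closed by exact Ht.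
  pose proof (uu_lt1 b t ltac:(lra)). pose proof (vv_lt1 b t ltac:(lra)).
  pose proof (rr_lt1 b Hb). pose proof (uv_prod b t).
  assert (0 < uu b t) by apply exp_pos. assert (0 < vv b t) by apply exp_pos.
  assert (0 < rr b) by apply exp_pos.
  unfold c_beta. fold (rr b).
  replace ((/ (1 - uu b t) + vv b t / (1 - vv b t)) / ((1 + rr b) / (1 - rr b)))
    with ((1 - rr b) * (1 - rr b) * / ((1 - uu b t) * (1 - vv b t))).
  - assert (Hp : forall x y, 0 < x -> 0 < y -> 0 < x * y) by (intros; apply Rmult_lt_0_compat; lra).
    unfold Lc. rewrite ln_mult by (try apply Rinv_0_lt_compat; apply Hp; lra).
    rewrite ln_Rinv by (apply Hp; lra).
    rewrite !ln_mult by lra. ring.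
  - field_simplify_eq; try lra. nra.
Qed.

Lemma ballR x e y : ball x e y -> Rabs (y - x) < e.
Proof. intros H. exact H. Qed.

Lemma exd_cont (f : R -> R) x : ex_derive f x -> continuous f x.
Proof. intros H. apply (ex_derive_continuous (K:=R_AbsRing) (V:=R_NormedModule)). exact H. Qed.

Lemma exRInt_cont (f : R -> R) a b :
  (forall z, Rmin a b <= z <= Rmax a b -> continuous f z) -> ex_RInt f a b.
Proof. intros H. apply (ex_RInt_continuous (V:=R_CompleteNormedModule)). exact H. Qed.

Lemma d_inner (g : R -> R) dg w y :
  is_derive g (y * w) dg -> is_derive (fun u => g (u * w)) y (w * dg).
Proof.
  intros H.
  apply (is_derive_comp g (fun u => u * w) y dg w) in H.
  - exact H.
  - auto_derive; auto; ring.
Qed.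

Lemma d_inner2 (g : R -> R) dg c y :
  is_derive g (y * c) dg ->
  is_derive (fun u => c * g (u * c)) y (c * (c * dg)).
Proof.
  intros H. apply is_derive_scal. apply d_inner. exact H.
Qed.

Lemma cont_inner (g : R -> R) y t :
  ex_derive g (y * (t - 1/2)) -> forall k : nat,
  continuous (fun s => (s - 1/2) ^ k * g (y * (s - 1/2))) t.
Proof.
  intros [dg H] k. apply exd_cont.
  apply ex_derive_mult.
  - auto_derive; auto.
  - exists (y * dg).
    apply (is_derive_comp g (fun s => y * (s - 1/2)) t dg y) in H.
    + exact H.
    + auto_derive; auto; ring.
Qed.

Definition Gk k (g : R -> R) h : R := RInt (fun x => (x - 1/2) ^ k * g (h * (x - 1/2))) 0 1.

Lemma key_bound b h u v : 0 < b -> Rabs h < b ->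
  Rabs (u - h) < Rmin 1 ((b - Rabs h) / (2 * b + 4)) ->
  Rabs (v - 1/2) <= 1/2 + Rmin 1 ((b - Rabs h) / (2 * b + 4)) ->
  Rabs (u * (v - 1/2)) < b / 2.
Proof.
  intros Hb Hh Hu Hv.
  set (d := Rmin 1 ((b - Rabs h) / (2 * b + 4))) in *.
  assert (Hd1 : d <= 1) by apply Rmin_l.
  assert (Hd2 : d <= (b - Rabs h) / (2 * b + 4)) by apply Rmin_r.
  assert (Hd3 : d * (2 * b + 4) <= b - Rabs h).
  { apply Rmult_le_reg_r with (/ (2*b+4)). apply Rinv_0_lt_compat; lra.
    rewrite Rmult_assoc, Rinv_r by lra. lra. }
  assert (Hd0 : 0 < d).
  { unfold d. apply Rmin_glb_lt; [lra|]. apply Rdiv_lt_0_compat; lra. }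
  rewrite Rabs_mult.
  assert (Hu' : Rabs u < Rabs h + d).
  { pose proof (Rabs_triang_inv u h). lra. }
  pose proof (Rabs_pos u). pose proof (Rabs_pos (v - 1/2)). pose proof (Rabs_pos h).
  apply Rle_lt_trans with ((Rabs h + d) * (1/2 + d)).
  - apply Rmult_le_compat; lra.
  - nra.
Qed.

Lemma param b (g g' : R -> R) k h :
  0 < b ->
  (forall t, Rabs t < b / 2 -> is_derive g t (g' t)) ->
  (forall t, Rabs t < b / 2 -> continuous g' t) ->
  Rabs h < b ->
  is_derive (Gk k g) h (Gk (S k) g' h).
Proof.
  intros Hb Hg Hg' Hh.
  set (d := Rmin 1 ((b - Rabs h) / (2 * b + 4))).
  assert (Hd0 : 0 < d).
  { unfold d. apply Rmin_glb_lt; [lra|]. apply Rdiv_lt_0_compat; lra. }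
  pose (dd := mkposreal d Hd0).
  assert (Hkey : forall u v, Rabs (u - h) < d -> Rabs (v - 1/2) <= 1/2 + d ->
     Rabs (u * (v - 1/2)) < b / 2) by (intros; apply (key_bound b h); auto).
  assert (Hin : forall t, 0 <= t <= 1 -> Rabs (t - 1/2) <= 1/2 + d).
  { intros t Ht. apply Rabs_le. lra. }
  assert (HD : forall u t, Rabs (u - h) < d -> Rabs (t - 1/2) <= 1/2 + d ->
     is_derive (fun z => (t - 1/2) ^ k * g (z * (t - 1/2))) u
       ((t - 1/2) ^ S k * g' (u * (t - 1/2)))).
  { intros u t Hu Ht.
    apply is_derive_ext with (fun z => (t - 1/2) ^ k * g (z * (t - 1/2))); [reflexivity|].
    replace ((t - 1/2) ^ S k * g' (u * (t - 1/2))) with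
      ((t - 1/2) ^ k * ((t - 1/2) * g' (u * (t - 1/2)))) by (simpl; ring).
    apply is_derive_scal. apply d_inner. apply Hg. auto. }
  unfold Gk at 1.
  replace (Gk (S k) g' h) with
    (RInt (fun t => Derive (fun u => (t - 1/2) ^ k * g (u * (t - 1/2))) h) 0 1).
  2:{ unfold Gk. apply RInt_ext. intros x Hx.
      rewrite Rmin_left in Hx by lra. rewrite Rmax_right in Hx by lra.
      apply is_derive_unique. apply HD. rewrite Rminus_diag, Rabs_R0; lra. apply Hin; lra. }
  apply (is_derive_RInt_param (fun u t => (t - 1/2) ^ k * g (u * (t - 1/2)))).
  - exists dd. intros y Hy t Ht. apply ballR in Hy. simpl in Hy.
    rewrite Rmin_left in Ht by lra. rewrite Rmax_right in Ht by lra.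
    eexists. apply HD; auto.
  - intros t Ht. rewrite Rmin_left in Ht by lra. rewrite Rmax_right in Ht by lra.
    apply continuity_2d_pt_ext_loc with
      (fun u v => (v - 1/2) ^ S k * g' (u * (v - 1/2))).
    + exists dd. intros u v Hu Hv. simpl in Hu, Hv.
      symmetry. apply is_derive_unique. apply HD; auto.
      apply Rabs_le. apply Rabs_def2 in Hv. lra.
    + apply continuity_2d_pt_mult.
      * apply (continuity_1d_2d_pt_comp (fun s => (s - 1/2) ^ S k) (fun _ v => v)).
        -- apply continuity_pt_filterlim. apply exd_cont. auto_derive; auto.
        -- apply continuity_2d_pt_id2.
      * apply (continuity_1d_2d_pt_comp g' (fun u v => u * (v - 1/2))).
        -- apply continuity_pt_filterlim. apply Hg'. apply Hkey.
           rewrite Rminus_diag, Rabs_R0; lra. apply Hin; lra.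
        -- apply continuity_2d_pt_mult. apply continuity_2d_pt_id1.
           apply continuity_2d_pt_minus. apply continuity_2d_pt_id2.
           apply continuity_2d_pt_const.
  - exists dd. intros y Hy. apply ballR in Hy. simpl in Hy.
    apply exRInt_cont. intros z Hz.
    rewrite Rmin_left in Hz by lra. rewrite Rmax_right in Hz by lra.
    apply (cont_inner g y z). eexists. apply Hg. apply Hkey; auto; apply Hin; auto.
Qed.

Definition dL b t := uu b t / (1 - uu b t) - vv b t / (1 - vv b t).
Definition d2L b t := uu b t / (1 - uu b t) ^ 2 + vv b t / (1 - vv b t) ^ 2.

Lemma abs_half b t : Rabs t < b / 2 -> uu b t < 1 /\ vv b t < 1.
Proof. intros H; apply Rabs_def2 in H; split; [apply uu_lt1|apply vv_lt1]; lra. Qed.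

Lemma Lc_derive b t : Rabs t < b / 2 -> is_derive (Lc b) t (dL b t).
Proof.
  intros H. destruct (abs_half b t H) as [H1 H2].
  unfold Lc, dL in *. unfold uu, vv in *.
  auto_derive.
  - unfold Rminus in *. repeat split; lra.
  - unfold Rminus in *. field. lra.
Qed.

Lemma dL_derive b t : Rabs t < b / 2 -> is_derive (dL b) t (d2L b t).
Proof.
  intros H. destruct (abs_half b t H) as [H1 H2].
  unfold d2L, dL in *. unfold uu, vv in *.
  auto_derive.
  - unfold Rminus in *. repeat split; lra.
  - unfold Rminus in *. field. lra.
Qed.

Lemma d2L_cont b t : Rabs t < b / 2 -> continuous (d2L b) t.
Proof.
  intros H. destruct (abs_half b t H) as [H1 H2].
  apply exd_cont. unfold d2L in *. unfold uu, vv in *.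
  auto_derive. unfold Rminus in *. repeat split; apply Rgt_not_eq, Rlt_gt; repeat apply Rmult_lt_0_compat; lra.
Qed.

Lemma dL_cont b t : Rabs t < b / 2 -> continuous (dL b) t.
Proof. intros H. apply exd_cont. eexists. apply dL_derive; auto. Qed.

Definition G0 b := Gk 0 (Lc b).
Definition G1 b := Gk 1 (dL b).
Definition G2 b := Gk 2 (d2L b).

Lemma G0_derive b h : 0 < b -> Rabs h < b -> is_derive (G0 b) h (G1 b h).
Proof. intros Hb Hh. exact (param b (Lc b) (dL b) 0 h Hb (Lc_derive b) (dL_cont b) Hh). Qed.

Lemma G1_derive b h : 0 < b -> Rabs h < b -> is_derive (G1 b) h (G2 b h).
Proof. intros Hb Hh. exact (param b (dL b) (d2L b) 1 h Hb (dL_derive b) (d2L_cont b) Hh). Qed.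

Lemma in01 h x : 0 < x < 1 -> Rabs (h * (x - 1/2)) <= Rabs h / 2.
Proof.
  intros Hx. rewrite Rabs_mult. pose proof (Rabs_pos h).
  assert (Rabs (x - 1/2) <= 1/2) by (apply Rabs_le; lra). nra.
Qed.

Lemma Gfun_G0 b h : 0 < b -> Rabs h < b -> Gfun b h = G0 b h.
Proof.
  intros Hb Hh. unfold Gfun, G0, Gk. apply RInt_ext. intros x Hx.
  rewrite Rmin_left in Hx by lra. rewrite Rmax_right in Hx by lra.
  rewrite pow_O, Rmult_1_l. apply Lfun_closed; auto.
  pose proof (in01 h x Hx). lra.
Qed.

Lemma Gfun_derive b h : 0 < b -> Rabs h < b -> is_derive (Gfun b) h (G1 b h).
Proof.
  intros Hb Hh. apply is_derive_ext_loc with (G0 b).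
  - assert (Hp : 0 < b - Rabs h) by lra.
    exists (mkposreal _ Hp). intros y Hy. apply ballR in Hy. simpl in Hy.
    symmetry. apply Gfun_G0; auto. pose proof (Rabs_triang_inv y h). lra.
  - apply G0_derive; auto.
Qed.

Lemma Derive_Gfun b h : 0 < b -> Rabs h < b -> Derive (Gfun b) h = G1 b h.
Proof. intros; apply is_derive_unique, Gfun_derive; auto. Qed.

Lemma exRInt_Gk b (g : R -> R) k h a c :
  (forall t, Rabs t < b / 2 -> ex_derive g t) -> Rabs h < b ->
  0 <= a -> a <= c -> c <= 1 ->
  ex_RInt (fun x => (x - 1/2) ^ k * g (h * (x - 1/2))) a c.
Proof.
  intros Hg Hh Ha Hac Hc. apply exRInt_cont. intros z Hz.
  rewrite Rmin_left in Hz by lra. rewrite Rmax_right in Hz by lra.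
  apply cont_inner. apply Hg.
  rewrite Rabs_mult. pose proof (Rabs_pos h).
  assert (Rabs (z - 1/2) <= 1/2) by (apply Rabs_le; lra). nra.
Qed.

Lemma Lc_exd b t : Rabs t < b / 2 -> ex_derive (Lc b) t.
Proof. intros; eexists; apply Lc_derive; auto. Qed.
Lemma dL_exd b t : Rabs t < b / 2 -> ex_derive (dL b) t.
Proof. intros; eexists; apply dL_derive; auto. Qed.
Lemma d2L_exd b t : Rabs t < b / 2 -> ex_derive (d2L b) t.
Proof.
  intros H. destruct (abs_half b t H) as [H1 H2].
  unfold d2L in *. unfold uu, vv in *.
  auto_derive. unfold Rminus in *. repeat split; apply Rgt_not_eq, Rlt_gt; repeat apply Rmult_lt_0_compat; lra.
Qed.

Lemma G2_nonneg b h : 0 < b -> Rabs h < b -> 0 <= G2 b h.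
Proof.
  intros Hb Hh. unfold G2, Gk. apply RInt_ge_0; [lra| |].
  - apply (exRInt_Gk b); auto; try lra. apply d2L_exd.
  - intros x Hx. pose proof (in01 h x Hx) as Hi.
    destruct (abs_half b (h * (x - 1/2)) ltac:(lra)) as [H1 H2].
    unfold d2L. assert (0 < uu b (h * (x - 1 / 2))) by apply exp_pos.
    assert (0 < vv b (h * (x - 1 / 2))) by apply exp_pos.
    apply Rmult_le_pos. apply pow2_ge_0.
    apply Rplus_le_le_0_compat; apply Rdiv_le_0_compat; try lra;
      apply pow_lt; lra.
Qed.

Lemma cont_of_derive (f : R -> R) x l : is_derive f x l -> continuity_pt f x.
Proof. intros H. apply continuity_pt_filterlim. apply exd_cont. exists l; exact H. Qed.

Lemma G1_mono b x y : 0 < b -> Rabs x < b -> Rabs y < b -> x <= y -> G1 b x <= G1 b y.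
Proof.
  intros Hb Hx Hy Hxy.
  destruct (MVT_gen (G1 b) x y (G2 b)) as [c [Hc Hc2]].
  - intros z Hz. rewrite Rmin_left in Hz by lra. rewrite Rmax_right in Hz by lra.
    apply G1_derive; auto. apply Rabs_def2 in Hx; apply Rabs_def2 in Hy. apply Rabs_def1; lra.
  - intros z Hz. rewrite Rmin_left in Hz by lra. rewrite Rmax_right in Hz by lra.
    apply cont_of_derive with (G2 b z). apply G1_derive; auto.
    apply Rabs_def2 in Hx; apply Rabs_def2 in Hy. apply Rabs_def1; lra.
  - rewrite Rmin_left in Hc by lra. rewrite Rmax_right in Hc by lra.
    assert (0 <= G2 b c).
    { apply G2_nonneg; auto. apply Rabs_def2 in Hx; apply Rabs_def2 in Hy. apply Rabs_def1; lra. }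
    nra.
Qed.

Lemma tangent b h0 h : 0 < b -> Rabs h0 < b -> Rabs h < b ->
  G0 b h0 + G1 b h0 * (h - h0) <= G0 b h.
Proof.
  intros Hb H0 H.
  destruct (MVT_gen (G0 b) h0 h (G1 b)) as [c [Hc Hc2]].
  - intros z Hz. apply G0_derive; auto.
    apply Rabs_def2 in H0; apply Rabs_def2 in H. apply Rabs_def1;
    [apply Rlt_le_trans with (Rmax h0 h)|apply Rle_lt_trans with (Rmin h0 h)];
    try lra; unfold Rmax, Rmin; destruct Rle_dec; lra.
  - intros z Hz. apply cont_of_derive with (G1 b z). apply G0_derive; auto.
    apply Rabs_def2 in H0; apply Rabs_def2 in H. apply Rabs_def1;
    [apply Rle_lt_trans with (Rmax h0 h)|apply Rlt_le_trans with (Rmin h0 h)];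
    try lra; unfold Rmax, Rmin; destruct Rle_dec; lra.
  - assert (Hcb : Rabs c < b).
    { apply Rabs_def2 in H0; apply Rabs_def2 in H. apply Rabs_def1;
      [apply Rle_lt_trans with (Rmax h0 h)|apply Rlt_le_trans with (Rmin h0 h)];
      try lra; unfold Rmax, Rmin; destruct Rle_dec; lra. }
    destruct (Rle_dec h0 h) as [Hle|Hlt].
    + rewrite Rmin_left in Hc by lra. rewrite Rmax_right in Hc by lra.
      pose proof (G1_mono b h0 c Hb H0 Hcb (proj1 Hc)). nra.
    + rewrite Rmin_right in Hc by lra. rewrite Rmax_left in Hc by lra.
      pose proof (G1_mono b c h0 Hb Hcb H0 (proj2 Hc)). nra.
Qed.

Lemma G1_zero b : G1 b 0 = 0.
Proof.
  assert (E : forall x : R, (x - 1/2) ^ 1 * dL b (0 * (x - 1/2)) = 0).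
  { intros x. rewrite Rmult_0_l. unfold dL, uu, vv.
    replace (- 0 - b / 2) with (0 - b / 2) by ring. ring. }
  unfold G1, Gk. rewrite (RInt_ext _ (fun _ => 0)).
  - rewrite RInt_const. unfold scal; simpl; unfold mult; simpl. ring.
  - intros x _. apply E.
Qed.

Lemma frac_mono u v : 0 < v -> v <= u -> u < 1 -> v / (1 - v) <= u / (1 - u).
Proof.
  intros H1 H2 H3.
  apply Rminus_le. replace (v / (1 - v) - u / (1 - u)) with ((v - u) / ((1 - v) * (1 - u)))
    by (field; lra).
  unfold Rdiv. assert (0 < / ((1 - v) * (1 - u))) by (apply Rinv_0_lt_compat; nra). nra.
Qed.

Lemma exp_le x y : x <= y -> exp x <= exp y.
Proof. intros [H|H]; [left; apply exp_increasing; auto|subst; lra]. Qed.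

Lemma integrand1_nonneg b h x : 0 < b -> 0 <= h < b -> 0 < x < 1 ->
  0 <= (x - 1/2) ^ 1 * dL b (h * (x - 1/2)).
Proof.
  intros Hb Hh Hx. pose proof (in01 h x Hx) as Hi.
  rewrite (Rabs_right h) in Hi by lra.
  destruct (abs_half b (h * (x - 1/2)) ltac:(lra)) as [H1 H2].
  assert (0 < uu b (h * (x - 1 / 2))) by apply exp_pos.
  assert (0 < vv b (h * (x - 1 / 2))) by apply exp_pos.
  rewrite pow_1. unfold dL.
  destruct (Rle_dec (1/2) x).
  - assert (vv b (h * (x - 1/2)) <= uu b (h * (x - 1/2))).
    { unfold uu, vv. apply exp_le. nra. }
    pose proof (frac_mono (uu b (h * (x - 1/2))) (vv b (h * (x - 1/2)))).
    apply Rmult_le_pos; lra.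
  - assert (uu b (h * (x - 1/2)) <= vv b (h * (x - 1/2))).
    { unfold uu, vv. apply exp_le. nra. }
    pose proof (frac_mono (vv b (h * (x - 1/2))) (uu b (h * (x - 1/2)))).
    nra.
Qed.

Lemma exp_neg_half b : 2 <= b -> exp (- (b / 2)) <= 1/2.
Proof.
  intros Hb. rewrite exp_Ropp. pose proof (exp_ineq1_le (b/2)).
  assert (2 <= exp (b/2)) by lra.
  replace (1/2) with (/ 2) by field. apply Rinv_le_contravar; lra.
Qed.

Lemma integrand1_lower b h x : 2 <= b -> 0 <= h < b -> 3/4 <= x < 1 ->
  / (4 * ((b - h) / 2 + b * (1 - x))) - 1/2 <= (x - 1/2) ^ 1 * dL b (h * (x - 1/2)).
Proof.
  intros Hb Hh Hx.
  pose proof (integrand1_nonneg b h x ltac:(lra) Hh ltac:(lra)) as Hnn.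
  rewrite pow_1 in *.
  set (t := h * (x - 1/2)) in *.
  assert (Ht0 : 0 <= t) by (unfold t; nra).
  assert (Ht1 : t <= h / 2) by (unfold t; nra).
  set (w := b / 2 - t).
  assert (Hw : 0 < w) by (unfold w; lra).
  set (D := (b - h) / 2 + b * (1 - x)).
  assert (HwD : w <= D) by (unfold w, D, t; nra).
  assert (Hu : uu b t = exp (- w)) by (unfold uu, w; f_equal; ring).
  assert (Hu1 : 1 - w <= exp (- w)) by (pose proof (exp_ineq1_le (- w)); lra).
  assert (Hu2 : exp (- w) < 1) by (rewrite <- exp_0; apply exp_increasing; lra).
  assert (Hu0 : 0 < exp (- w)) by apply exp_pos.
  assert (F1 : / w - 1 <= uu b t / (1 - uu b t)).
  { rewrite Hu. replace (exp (- w) / (1 - exp (- w))) with (/ (1 - exp (- w)) - 1)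
      by (field; lra).
    assert (/ w <= / (1 - exp (- w))) by (apply Rinv_le_contravar; lra). lra. }
  assert (Hv : vv b t <= 1/2).
  { apply Rle_trans with (exp (- (b / 2))); [|apply exp_neg_half; auto].
    unfold vv. apply exp_le. lra. }
  assert (Hv0 : 0 < vv b t) by apply exp_pos.
  assert (F2 : vv b t / (1 - vv b t) <= 1).
  { apply Rmult_le_reg_r with (1 - vv b t); [lra|].
    unfold Rdiv. rewrite Rmult_assoc, Rinv_l by lra. lra. }
  assert (F3 : / D <= / w) by (apply Rinv_le_contravar; lra).
  assert (HdL : / w - 2 <= dL b t) by (unfold dL; lra).
  assert (HdL0 : 0 <= dL b t).
  { apply Rmult_le_reg_l with (x - 1/2); [lra|]. lra. }
  rewrite Rinv_mult.
  assert (0 <= / D) by (left; apply Rinv_0_lt_compat; lra).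
  nra.
Qed.

Lemma lower_int b e : 0 < b -> 0 < e ->
  is_RInt (fun x => / (4 * (e + b * (1 - x))) - 1/2) (3/4) 1
    ((ln (e + b / 4) - ln e) / (4 * b) - 1/8).
Proof.
  intros Hb He.
  replace ((ln (e + b / 4) - ln e) / (4 * b) - 1/8) with
    (minus ((fun x => - ln (e + b * (1 - x)) / (4 * b) - x / 2) 1)
           ((fun x => - ln (e + b * (1 - x)) / (4 * b) - x / 2) (3/4))).
  2:{ unfold minus, plus, opp; simpl.
      replace (e + b * (1 - 1)) with e by ring.
      replace (e + b * (1 - 3/4)) with (e + b / 4) by field. field. lra. }
  apply (is_RInt_derive (V:=R_CompleteNormedModule) (fun x => - ln (e + b * (1 - x)) / (4 * b) - x / 2)).
  - intros x Hx. rewrite Rmin_left in Hx by lra. rewrite Rmax_right in Hx by lra.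
    auto_derive.
    + nra.
    + field. split; nra.
  - intros x Hx. rewrite Rmin_left in Hx by lra. rewrite Rmax_right in Hx by lra.
    apply exd_cont. auto_derive. nra.
Qed.

Lemma G1_lower b h : 2 <= b -> 0 <= h < b ->
  (ln ((b - h) / 2 + b / 4) - ln ((b - h) / 2)) / (4 * b) - 1/8 <= G1 b h.
Proof.
  intros Hb Hh.
  assert (Hh' : Rabs h < b) by (rewrite Rabs_right; lra).
  assert (Hd : forall t, Rabs t < b / 2 -> ex_derive (dL b) t) by apply dL_exd.
  unfold G1, Gk.
  rewrite <- (RInt_Chasles _ 0 (3/4) 1).
  2:{ apply (exRInt_Gk b); auto; lra. }
  2:{ apply (exRInt_Gk b); auto; lra. }
  unfold plus. cbn -[RInt pow].
  assert (A : 0 <= RInt (fun x => (x - 1/2) ^ 1 * dL b (h * (x - 1/2))) 0 (3/4)).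
  { apply RInt_ge_0; [lra| |].
    - apply (exRInt_Gk b); auto; lra.
    - intros x Hx. apply integrand1_nonneg; auto; lra. }
  assert (B : RInt (fun x => / (4 * ((b - h) / 2 + b * (1 - x))) - 1/2) (3/4) 1
             <= RInt (fun x => (x - 1/2) ^ 1 * dL b (h * (x - 1/2))) (3/4) 1).
  { apply RInt_le; [lra| | |].
    - eexists. apply lower_int; lra.
    - apply (exRInt_Gk b); auto; lra.
    - intros x Hx. apply integrand1_lower; auto; lra. }
  rewrite (is_RInt_unique _ _ _ _ (lower_int b ((b - h) / 2) ltac:(lra) ltac:(lra))) in B.
  lra.
Qed.

Lemma witness b q : 4 <= b -> 0 < q -> exists h, 0 <= h < b /\ Derive (Gfun b) h = q.
Proof.
  intros Hb Hq.
  set (e := exp (- (4 * b * (q + 1)))).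
  assert (He0 : 0 < e) by apply exp_pos.
  assert (He1 : e <= 1) by (unfold e; apply Rle_trans with (exp 0); [apply exp_le; nra| rewrite exp_0; lra]).
  set (h1 := b - 2 * e).
  assert (Hh1 : 0 <= h1 < b) by (unfold h1; lra).
  pose proof (G1_lower b h1 ltac:(lra) Hh1) as HL.
  replace ((b - h1) / 2) with e in HL by (unfold h1; field).
  assert (Hln1 : 0 <= ln (e + b / 4)).
  { rewrite <- ln_1. apply ln_le; lra. }
  assert (Hln2 : ln e = - (4 * b * (q + 1))) by (unfold e; apply ln_exp).
  rewrite Hln2 in HL.
  assert (HL2 : q < G1 b h1).
  { eapply Rlt_le_trans; [|exact HL].
    apply Rlt_le_trans with ((0 + 4 * b * (q + 1)) / (4 * b) - 1/8).
    - replace ((0 + 4 * b * (q + 1)) / (4 * b)) with (q + 1) by (field; lra). lra.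
    - apply Rplus_le_compat_r. unfold Rdiv. apply Rmult_le_compat_r.
      + left; apply Rinv_0_lt_compat; lra.
      + lra. }
  destruct (Ranalysis5.IVT_interv (fun h => G1 b h - q) 0 h1) as [z [Hz1 Hz2]].
  - intros a Ha. apply (continuity_pt_minus (G1 b) (fun _ => q)).
    + apply cont_of_derive with (G2 b a). apply G1_derive; [lra|].
      rewrite Rabs_right; lra.
    + apply continuity_pt_const. intros u v; reflexivity.
  - unfold h1; lra.
  - rewrite G1_zero. lra.
  - lra.
  - exists z. split; [lra|]. rewrite Derive_Gfun; [lra|lra|].
    rewrite Rabs_right; lra.
Qed.
Definition AA w := 2 * sqrt w / sqrt (1 + w).
Definition MM w := / (sqrt w * sqrt (1 + w) * (1 + w)).
Lemma AA_derive w : 0 < w -> is_derive AA w (MM w).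
Proof.
  intros Hw. unfold AA, MM. auto_derive.
  - repeat split; try lra. apply Rgt_not_eq, sqrt_lt_R0; lra.
  - assert (Hs0 : 0 < sqrt w) by (apply sqrt_lt_R0; lra).
    assert (Ht0 : 0 < sqrt (1 + w)) by (apply sqrt_lt_R0; lra).
    assert (Hs : sqrt w * sqrt w = w) by (apply sqrt_sqrt; lra).
    assert (Ht : sqrt (1 + w) * sqrt (1 + w) = 1 + w) by (apply sqrt_sqrt; lra).
    set (s := sqrt w) in *. set (t := sqrt (1 + w)) in *.
    rewrite <- Ht. field_simplify_eq; try (split; lra).
    nra.
Qed.

Lemma ln_le_sub1 z : 0 < z -> ln z <= z - 1.
Proof.
  intros Hz. pose proof (exp_ineq1_le (ln z)). rewrite exp_ln in H by lra. lra.
Qed.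

Lemma psi_bound w : 0 < w -> - ln (1 - exp (- w)) <= 17 * MM w.
Proof.
  intros Hw.
  assert (Hy0 : 0 < exp (- w)) by apply exp_pos.
  assert (Hy1 : exp (- w) < 1) by (rewrite <- exp_0; apply exp_increasing; lra).
  assert (Hs0 : 0 < sqrt w) by (apply sqrt_lt_R0; lra).
  assert (Ht0 : 0 < sqrt (1 + w)) by (apply sqrt_lt_R0; lra).
  assert (Hs : sqrt w * sqrt w = w) by (apply sqrt_sqrt; lra).
  assert (Ht : sqrt (1 + w) * sqrt (1 + w) = 1 + w) by (apply sqrt_sqrt; lra).
  assert (Hew : 1 + w <= exp w) by apply exp_ineq1_le.
  assert (Hexp : exp (- w) * exp w = 1) by (rewrite <- exp_plus; replace (- w + w) with 0 by ring; apply exp_0).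
  unfold MM.
  set (s := sqrt w) in *. set (t := sqrt (1 + w)) in *.
  set (y := exp (- w)) in *. set (E := exp w) in *.
  rewrite <- ln_Rinv by lra.
  destruct (Rle_dec w 1) as [Hw1|Hw1].
  - (* ln(1/(1-y)) <= ln ((1+w)/w) <= 2 t / s *)
    assert (H1 : / (1 - y) <= t * t / (s * s)).
    { rewrite Ht, Hs.
      assert (y * (1 + w) <= 1) by nra.
      apply Rmult_le_reg_r with ((1 - y) * w); [nra|].
      field_simplify; try lra. }
    assert (H2 : ln (/ (1 - y)) <= ln (t * t / (s * s))).
    { apply ln_le; [apply Rinv_0_lt_compat; lra| exact H1]. }
    assert (H3 : ln (t * t / (s * s)) = 2 * ln (t / s)).
    { replace (t * t / (s * s)) with ((t / s) * (t / s)) by (field; lra).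
      rewrite ln_mult; [ring| |]; apply Rdiv_lt_0_compat; lra. }
    assert (H4 : ln (t / s) <= t / s - 1) by (apply ln_le_sub1; apply Rdiv_lt_0_compat; lra).
    assert (H5 : 2 * (t / s) <= 17 * / (s * t * (1 + w))).
    { rewrite <- Ht.
      apply Rmult_le_reg_r with (s * t * (t * t)); [repeat apply Rmult_lt_0_compat; lra|].
      field_simplify; try lra. nra. }
    lra.
  - assert (H1 : ln (/ (1 - y)) <= / (1 - y) - 1)
      by (apply ln_le_sub1; apply Rinv_0_lt_compat; lra).
    assert (HE : 1 + w + w * w / 4 <= E).
    { unfold E. replace w with (w / 2 + w / 2) at 4 by field.
      rewrite exp_plus. pose proof (exp_ineq1_le (w / 2)). nra. }
    assert (H2 : / (1 - y) - 1 = / (E - 1)).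
    { field_simplify_eq; try lra; try nra. }
    assert (Hst : s * t <= 3/2 * w) by nra.
    assert (H3 : / (E - 1) <= 17 * / (s * t * (1 + w))).
    { apply Rmult_le_reg_r with ((E - 1) * (s * t * (1 + w))).
      - apply Rmult_lt_0_compat; [nra|]. repeat apply Rmult_lt_0_compat; lra.
      - field_simplify; try (split; lra); try lra. assert (s * t * (w + 1) <= 3/2 * w * (w + 1)) by (apply Rmult_le_compat_r; lra). nra. }
    lra.
Qed.


Lemma AA_bounds w : 0 < w -> 0 <= AA w <= 2.
Proof.
  intros Hw. unfold AA.
  assert (Hs0 : 0 < sqrt w) by (apply sqrt_lt_R0; lra).
  assert (Ht0 : 0 < sqrt (1 + w)) by (apply sqrt_lt_R0; lra).
  assert (Hst : sqrt w <= sqrt (1 + w)) by (apply sqrt_le_1; lra).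
  split.
  - apply Rdiv_le_0_compat; lra.
  - apply Rmult_le_reg_r with (sqrt (1 + w)); [lra|].
    unfold Rdiv. rewrite Rmult_assoc, Rinv_l by lra. lra.
Qed.

Lemma is_derive_Rminus (f g : R -> R) x df dg :
  is_derive f x df -> is_derive g x dg -> is_derive (fun y => f y - g y) x (df - dg).
Proof. intros; apply (is_derive_minus f g); auto. Qed.

Lemma AA_comp e h x : 0 < e + h * x ->
  is_derive (fun y => AA (e + h * y)) x (h * MM (e + h * x)).
Proof.
  intros H. apply (is_derive_comp AA (fun y => e + h * y) x (MM (e + h * x)) h).
  - apply AA_derive; auto.
  - auto_derive; auto; ring.
Qed.

Lemma upper_int h e : 0 < h -> 0 < e ->
  is_RInt (fun x => 17 * (MM (e + h * (1 - x)) + MM (e + h * x))) 0 1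
    (34 / h * (AA (e + h) - AA e)).
Proof.
  intros Hh He.
  assert (Eq : 34 / h * (AA (e + h) - AA e) =
    minus ((fun x => 17 / h * (AA (e + h * x) - AA ((e + h) + (- h) * x))) 1)
          ((fun x => 17 / h * (AA (e + h * x) - AA ((e + h) + (- h) * x))) 0)).
  { unfold minus, plus, opp; simpl.
    replace (e + h * 1) with (e + h) by ring.
    replace (e + h + - h * 1) with e by ring.
    replace (e + h * 0) with e by ring.
    replace (e + h + - h * 0) with (e + h) by ring. field. lra. }
  rewrite Eq.
  apply (is_RInt_derive (V:=R_CompleteNormedModule)
    (fun x => 17 / h * (AA (e + h * x) - AA ((e + h) + (- h) * x)))).
  - intros x Hx. rewrite Rmin_left in Hx by lra. rewrite Rmax_right in Hx by lra.
    replace (17 * (MM (e + h * (1 - x)) + MM (e + h * x))) with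
      (17 / h * (h * MM (e + h * x) - (- h) * MM ((e + h) + (- h) * x))).
    2:{ replace ((e + h) + (- h) * x) with (e + h * (1 - x)) by ring. field. lra. }
    apply is_derive_scal. apply is_derive_Rminus.
    + apply AA_comp. nra.
    + apply (AA_comp (e + h) (- h) x). nra.
  - intros x Hx. rewrite Rmin_left in Hx by lra. rewrite Rmax_right in Hx by lra.
    apply exd_cont. unfold MM. auto_derive.
    assert (0 < e + h * (1 - x)) by nra. assert (0 < e + h * x) by nra.
    assert (0 < sqrt (e + h * (1 - x))) by (apply sqrt_lt_R0; lra).
    assert (0 < sqrt (1 + (e + h * (1 - x)))) by (apply sqrt_lt_R0; lra).
    assert (0 < sqrt (e + h * x)) by (apply sqrt_lt_R0; lra).
    assert (0 < sqrt (1 + (e + h * x))) by (apply sqrt_lt_R0; lra).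
    unfold Rminus in *. repeat split; try lra; apply Rgt_not_eq; repeat apply Rmult_lt_0_compat; lra.
Qed.

Lemma Lc_nonneg b t : 0 < b -> Rabs t < b / 2 -> 0 <= Lc b t.
Proof.
  intros Hb Ht. destruct (abs_half b t Ht) as [H1 H2].
  pose proof (uv_prod b t). pose proof (rr_lt1 b Hb).
  assert (0 < uu b t) by apply exp_pos. assert (0 < vv b t) by apply exp_pos.
  assert (0 < rr b) by apply exp_pos.
  assert (0 <= (uu b t - vv b t) ^ 2) by apply pow2_ge_0.
  assert (Hs : 2 * rr b <= uu b t + vv b t).
  { assert (0 <= (uu b t + vv b t - 2 * rr b) * (uu b t + vv b t + 2 * rr b)) by nra. nra. }
  unfold Lc.
  pose proof (ln_mult (1 - uu b t) (1 - vv b t) ltac:(lra) ltac:(lra)).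
  replace (2 * ln (1 - rr b)) with (ln ((1 - rr b) * (1 - rr b)))
    by (rewrite ln_mult by lra; ring).
  assert (ln ((1 - uu b t) * (1 - vv b t)) <= ln ((1 - rr b) * (1 - rr b))).
  { apply ln_le; [apply Rmult_lt_0_compat; lra| nra]. }
  lra.
Qed.

Lemma G0_nonneg b h : 0 < b -> Rabs h < b -> 0 <= G0 b h.
Proof.
  intros Hb Hh. unfold G0, Gk. apply RInt_ge_0; [lra| |].
  - apply (exRInt_Gk b); auto; try lra. apply Lc_exd.
  - intros x Hx. rewrite pow_O, Rmult_1_l. apply Lc_nonneg; auto.
    pose proof (in01 h x Hx). lra.
Qed.

Lemma G0_upper b h : 0 < b -> 0 < h < b -> G0 b h <= 68 / h.
Proof.
  intros Hb Hh.
  set (e := (b - h) / 2).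
  assert (He : 0 < e) by (unfold e; lra).
  assert (Hh' : Rabs h < b) by (rewrite Rabs_right; lra).
  apply Rle_trans with (34 / h * (AA (e + h) - AA e)).
  2:{ pose proof (AA_bounds (e + h) ltac:(lra)). pose proof (AA_bounds e He).
      apply Rle_trans with (34 / h * 2).
      - apply Rmult_le_compat_l; [apply Rdiv_le_0_compat; lra| lra].
      - right; field; lra. }
  rewrite <- (is_RInt_unique _ _ _ _ (upper_int h e ltac:(lra) He)).
  unfold G0, Gk. apply RInt_le; [lra| | |].
  - apply (exRInt_Gk b); auto; try lra. apply Lc_exd.
  - eexists. apply upper_int; lra.
  - intros x Hx. rewrite pow_O, Rmult_1_l.
    pose proof (in01 h x Hx) as Hi.
    destruct (abs_half b (h * (x - 1/2)) ltac:(lra)) as [H1 H2].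
    assert (Hw : uu b (h * (x - 1/2)) = exp (- (e + h * (1 - x))))
      by (unfold uu, e; f_equal; field).
    assert (Hw' : vv b (h * (x - 1/2)) = exp (- (e + h * x)))
      by (unfold vv, e; f_equal; field).
    pose proof (psi_bound (e + h * (1 - x)) ltac:(nra)).
    pose proof (psi_bound (e + h * x) ltac:(nra)).
    assert (Hr : ln (1 - rr b) <= 0).
    { pose proof (rr_lt1 b Hb). assert (0 < rr b) by apply exp_pos.
      rewrite <- ln_1. apply ln_le; lra. }
    unfold Lc. rewrite Hw, Hw'. lra.
Qed.

Lemma lnGamma b : 4 <= b -> exists eps, ln (Gamma b) = - b + eps /\ 0 <= eps <= 8 / b.
Proof.
  intros Hb.
  set (r := exp (- (b / 2))).
  assert (Hr0 : 0 < r) by apply exp_pos.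
  assert (Hr2 : r <= 2 / b).
  { unfold r. rewrite exp_Ropp. pose proof (exp_ineq1_le (b / 2)).
    replace (2 / b) with (/ (b / 2)) by (field; lra).
    apply Rinv_le_contravar; lra. }
  assert (Hr1 : r <= 1/2).
  { apply Rle_trans with (2 / b); auto. apply Rmult_le_reg_r with b; [lra|].
    unfold Rdiv. rewrite Rmult_assoc, Rinv_l by lra. lra. }
  assert (E1 : exp (- b) = r * r) by (unfold r; rewrite <- exp_plus; f_equal; field).
  assert (E2 : exp (- (3 * b / 2)) = r * r * r)
    by (unfold r; rewrite <- !exp_plus; f_equal; field).
  assert (EG : Gamma b = exp (- b) * ((1 + r) / (1 - r))).
  { unfold Gamma. fold r. rewrite E2, E1. field. lra. }
  exists (ln ((1 + r) / (1 - r))). split.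
  - rewrite EG, ln_mult, ln_exp; [reflexivity|apply exp_pos|].
    apply Rdiv_lt_0_compat; lra.
  - assert (Hq : 1 <= (1 + r) / (1 - r)).
    { apply Rmult_le_reg_r with (1 - r); [lra|]. unfold Rdiv.
      rewrite Rmult_assoc, Rinv_l by lra. lra. }
    split.
    + rewrite <- ln_1. apply ln_le; lra.
    + apply Rle_trans with ((1 + r) / (1 - r) - 1).
      * apply ln_le_sub1. lra.
      * replace ((1 + r) / (1 - r) - 1) with (2 * r / (1 - r)) by (field; lra).
        apply Rle_trans with (4 * r); [|lra].
        apply Rmult_le_reg_r with (1 - r); [lra|]. unfold Rdiv.
        rewrite Rmult_assoc, Rinv_l by lra. nra.
Qed.

Lemma htilde_spec b q : 4 <= b -> 0 < q ->
  0 <= htilde b q < b /\ G1 b (htilde b q) = q.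
Proof.
  intros Hb Hq. unfold htilde.
  pose proof (epsilon_spec (inhabits 0) (fun h => 0 <= h < b /\ Derive (Gfun b) h = q)
    (witness b q Hb Hq)) as [H1 H2].
  split; auto. rewrite <- Derive_Gfun; auto; [lra|]. rewrite Rabs_right; lra.
Qed.

Theorem proposition5p1 :
  exists C beta0 : R,
    forall beta : R, beta_c < beta -> beta0 <= beta ->
    forall a : R, 0 < a ->
      (forall a' : R, 0 < a' -> T0 beta a' <= T0 beta a) ->
      Rabs (/ a ^ 2 - 1) <= C / beta ^ 2.
Proof.
  exists 10000, 100. intros b _ Hb a Ha Hmax.
  assert (Hb4 : 4 <= b) by lra.
  pose proof (Hmax 1 ltac:(lra)) as HT. clear Hmax. unfold T0 in HT.
  replace (/ 1 ^ 2) with 1 in HT by field.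
  set (q := / a ^ 2) in *.
  assert (Hq : 0 < q) by (unfold q; apply Rinv_0_lt_compat; apply pow_lt; lra).
  assert (Hqa : q * (a * a) = 1) by (unfold q; field; lra).
  destruct (htilde_spec b q Hb4 Hq) as [Ha1 Ha2].
  destruct (htilde_spec b 1 Hb4 ltac:(lra)) as [H11 H12].
  set (ha := htilde b q) in *. set (h1 := htilde b 1) in *.
  destruct (lnGamma b Hb4) as [eps [Heps1 Heps2]].
  rewrite Heps1 in HT.
  rewrite !Gfun_G0 in HT by (lra || (rewrite Rabs_right; lra)).
  set (hs := b - 1 / b).
  assert (Hbinv : 0 < 1 / b <= 1) by (split; [apply Rdiv_lt_0_compat; lra|];
    apply Rmult_le_reg_r with b; [lra|]; unfold Rdiv; rewrite Rmult_assoc, Rinv_l by lra; lra).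
  assert (Hhs : b / 2 <= hs < b) by (unfold hs; lra).
  assert (HGs : G0 b hs <= 136 / b).
  { apply Rle_trans with (68 / hs).
    - apply G0_upper; lra.
    - apply Rmult_le_reg_r with (hs * b); [nra|].
      unfold Rdiv. field_simplify; try lra; try nra. }
  assert (Ra : forall h, 0 <= h < b -> Rabs h < b) by (intros; rewrite Rabs_right; lra).
  pose proof (tangent b h1 hs ltac:(lra) (Ra _ H11) (Ra hs ltac:(lra))) as T1.
  pose proof (tangent b ha h1 ltac:(lra) (Ra _ Ha1) (Ra _ H11)) as T2.
  pose proof (tangent b ha hs ltac:(lra) (Ra _ Ha1) (Ra hs ltac:(lra))) as T3.
  rewrite H12 in T1. rewrite Ha2 in T2, T3.
  pose proof (G0_nonneg b h1 ltac:(lra) (Ra _ H11)) as N1.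
  set (Gs := G0 b hs) in *. set (Ga := G0 b ha) in *. set (Gb := G0 b h1) in *.
  assert (Hbe : b * eps <= 8).
  { apply Rmult_le_reg_r with (/ b); [apply Rinv_0_lt_compat; lra|].
    replace (b * eps * / b) with eps by (field; lra). lra. }
  assert (HbG : b * Gs <= 136).
  { apply Rmult_le_reg_r with (/ b); [apply Rinv_0_lt_compat; lra|].
    replace (b * Gs * / b) with Gs by (field; lra). lra. }
  assert (C1 : - b + eps + Gb - h1 <= a * (- b + eps) + a * (Gs - q * hs)).
  { apply Rle_trans with (a * (- b + eps) + a * (Ga - q * ha)).
    - lra.
    - assert (Ga - q * ha <= Gs - q * hs) by lra. nra. }
  assert (C2 : a * (- b + eps + Gb - h1) <= a * a * (- b + eps) + a * a * Gs - hs).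
  { replace (a * a * (- b + eps) + a * a * Gs - hs) with
      (a * (a * (- b + eps) + a * (Gs - q * hs))).
    - apply Rmult_le_compat_l; lra.
    - replace hs with (q * (a * a) * hs) at 2 by (rewrite Hqa; ring). ring. }
  assert (C3 : b * b * ((a - 1) * (a - 1)) <= 144 * (a * a) + 1).
  { assert (a * (- 2 * b + eps) <= a * (- b + eps + Gb - h1)) by nra.
    assert (b * (a - 1) * (a - 1) <= a * a * eps + a * a * Gs + 1 / b) by (unfold hs in C2; nra).
    assert (b * (b * (a - 1) * (a - 1)) <= b * (a * a * eps + a * a * Gs + 1 / b))
      by (apply Rmult_le_compat_l; lra).
    replace (b * (a * a * eps + a * a * Gs + 1 / b)) with
      (a * a * (b * eps) + a * a * (b * Gs) + 1) in H1 by (field; lra).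
    assert (0 <= a * a) by nra. nra. }
  assert (Hb2 : 10000 <= b * b) by nra.
  assert (Ha2' : 1/2 <= a <= 2).
  { split.
    - destruct (Rle_dec (1/2) a); auto.
      assert (1/4 < (a - 1) * (a - 1)) by nra.
      assert (a * a < 1/4) by nra. nra.
    - destruct (Rle_dec a 2); auto.
      assert (0 < (a / 2 - 1) * (3 * a / 2 - 1)) by (apply Rmult_lt_0_compat; lra).
      assert (a * a / 4 < (a - 1) * (a - 1)) by nra. nra. }
  assert (M1 : - b + eps + Gb - h1 <= a * (- b + eps) + a * (Gb - q * h1)).
  { apply Rle_trans with (a * (- b + eps) + a * (Ga - q * ha)).
    - lra.
    - assert (Ga - q * ha <= Gb - q * h1) by lra. nra. }
  assert (M2 : a * (- b + eps + Gb - h1) <= a * a * (- b + eps) + a * a * Gb - h1).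
  { replace (a * a * (- b + eps) + a * a * Gb - h1) with
      (a * (a * (- b + eps) + a * (Gb - q * h1))).
    - apply Rmult_le_compat_l; lra.
    - replace h1 with (q * (a * a) * h1) at 2 by (rewrite Hqa; ring). ring. }
  set (d := b - h1).
  assert (Hd : Gb + d <= 137 / b).
  { unfold d. unfold hs in T1.
    assert (Gb + (b - h1) <= Gs + 1 / b) by lra.
    apply Rle_trans with (Gs + 1 / b); auto.
    replace (137 / b) with (136 / b + 1 / b) by (field; lra). lra. }
  assert (Hd0 : 0 < d) by (unfold d; lra).
  set (K := a * eps + a * Gb - d).
  assert (M3 : b * ((a - 1) * (a - 1)) <= (a - 1) * K).
  { unfold K, d. nra. }
  assert (HbK : b * K <= 427 /\ - 427 <= b * K).
  { assert (HbGd : b * (Gb + d) <= 137).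
    { apply Rmult_le_reg_r with (/ b); [apply Rinv_0_lt_compat; lra|].
      replace (b * (Gb + d) * / b) with (Gb + d) by (field; lra).
      replace (137 * / b) with (137 / b) by reflexivity. lra. }
    assert (0 <= b * Gb) by (apply Rmult_le_pos; lra).
    assert (0 <= b * d) by (apply Rmult_le_pos; lra).
    assert (0 <= b * eps) by (apply Rmult_le_pos; lra).
    assert (EK : b * K = a * (b * eps) + a * (b * Gb) - b * d) by (unfold K; ring).
    assert (a * (b * eps) <= 2 * 8) by (apply Rmult_le_compat; lra).
    assert (a * (b * Gb) <= 2 * 137) by (apply Rmult_le_compat; lra).
    assert (0 <= a * (b * eps)) by (apply Rmult_le_pos; lra).
    assert (0 <= a * (b * Gb)) by (apply Rmult_le_pos; lra).
    rewrite EK. split; lra. }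
  assert (Habs : b * b * Rabs (a - 1) <= 427).
  { destruct (Rle_dec 1 a).
    - rewrite Rabs_right by lra.
      destruct (Req_dec a 1) as [Ha1'|Hne].
      + rewrite Ha1'. replace (b * b * (1 - 1)) with 0 by ring. lra.
      + assert (b * (a - 1) <= K).
        { apply Rmult_le_reg_l with (a - 1); [lra|].
          replace ((a - 1) * (b * (a - 1))) with (b * ((a - 1) * (a - 1))) by ring. lra. }
        assert (b * (b * (a - 1)) <= b * K) by (apply Rmult_le_compat_l; lra).
        replace (b * b * (a - 1)) with (b * (b * (a - 1))) by ring. lra.
    - rewrite Rabs_left by lra.
      assert (b * (1 - a) <= - K).
      { apply Rmult_le_reg_l with (1 - a); [lra|].
        replace ((1 - a) * (b * (1 - a))) with (b * ((a - 1) * (a - 1))) by ring.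
        replace ((1 - a) * - K) with ((a - 1) * K) by ring. lra. }
      assert (b * (b * (1 - a)) <= b * (- K)) by (apply Rmult_le_compat_l; lra).
      replace (b * b * - (a - 1)) with (b * (b * (1 - a))) by ring. lra. }
  assert (Hq4 : q <= 4).
  { unfold q. replace 4 with (/ (1/2) ^ 2) by field.
    apply Rinv_le_contravar; [nra|]. apply pow_incr; lra. }
  replace (q - 1) with (q - q * (a * a)) by (rewrite Hqa; reflexivity).
  replace (q - q * (a * a)) with (- ((a - 1) * (a + 1) * q)) by ring.
  rewrite Rabs_Ropp, !Rabs_mult, (Rabs_right (a + 1)), (Rabs_right q) by lra.
  apply Rmult_le_reg_r with (b ^ 2); [nra|].
  replace (10000 / b ^ 2 * b ^ 2) with 10000 by (field; nra).
  assert (0 <= Rabs (a - 1)) by apply Rabs_pos.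
  assert (Rabs (a - 1) * (a + 1) * q <= Rabs (a - 1) * 12).
  { rewrite Rmult_assoc. apply Rmult_le_compat_l; auto. nra. }
  simpl. nra.
Qed.
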